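(* For every linear-time property $\varphi$ over a finite alphabet $\Sigma$ and every bound $n \in \mathbb{N}$, there is a deterministic safety automaton $\mathcal{A}$ with $O(|\Sigma|^n \cdot 2^{n \log n})$ states such that $L(\mathcal{A})$ is an $n$-lasso-precise underapproximation of $\varphi$, i.e., $L(\mathcal{A}) \subseteq \varphi$ and $L_n(L(\mathcal{A})) = L_n(\varphi)$.
   Context: A linear-time property over $\Sigma$ is a set $\varphi \subseteq \Sigma^\omega$. A lasso of length $n$ is a pair $(u,v)$ with $u\in\Sigma^*$, $v\in\Sigma^+$, $|u\cdot v|=n$, inducing the word $u\cdot v^\omega$. For a property $\psi$, $L_n(\psi)=\{u\cdot v^\omega \in \psi \mid u\in\Sigma^*, v\in\Sigma^+, |u\cdot v|=n\}$. A property $\varphi'$ is an $n$-lasso-precise underapproximation of $\varphi$ if $\varphi'\subseteq\varphi$ and $L_n(\varphi')=L_n(\varphi)$. A nondeterministic parity automaton over $\Sigma$ is $\mathcal{A}=(Q,Q_0,\delta,\mu)$ with finite state set $Q$, initial states $Q_0\subseteq Q$, transition function $\delta: Q\times\Sigma\to\mathcal{P}(Q)$, and coloring $\mu: Q\to C$ for a finite $C\subset\mathbb{N}$. A run on $\alpha_1\alpha_2\cdots$ is a sequence $q_0q_1\cdots$ with $q_0\in Q_0$ and $q_{i+1}\in\delta(q_i,\alpha_{i+1})$; it is accepting if the highest color occurring infinitely often in $\mu(q_0)\mu(q_1)\cdots$ is even; $L(\mathcal{A})$ is the set of words with an accepting run. The automaton is deterministic if $|Q_0|=1$ and $|\delta(q,\alpha)|\le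 1$ for all $q,\alpha$ (missing successors allowed). A safety automaton is one where all states have color $0$, so every infinite run is accepting. The size of an automaton is its number of states. *)

(* Defs.v *)
From mathcomp Require Import all_boot.
Set Implicit Arguments. Unset Strict Implicit. Unset Printing Implicit Defensive.

(* Infinite words over Sigma: positions 0,1,2,...  (w 0 is the paper's alpha_1). *)
Definition word (Sigma : Type) := nat -> Sigma.

Definition property (Sigma : Type) := word Sigma -> Prop.

(* The word u . v^omega, where v = a :: v' is nonempty. *)
Definition lasso_word (Sigma : Type) (u : seq Sigma) (a : Sigma) (v' : seq Sigma)
  : word Sigma :=
  fun i => if i < size u then nth a u i
           else nth a (a :: v') ((i - size u) %% size (a :: v')).

Definition Ln (Sigma : Type) (n : nat) (psi : property Sigma) : property Sigma :=
  fun w => psi w /\ exists (u : seq Sigma) (a : Sigma) (v' : seq Sigma),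
      size u + size (a :: v') = n /\ w = lasso_word u a v'.

Definition lasso_precise_under (Sigma : Type) (n : nat) (phi' phi : property Sigma) : Prop :=
  (forall w, phi' w -> phi w) /\ (forall w, Ln n phi' w <-> Ln n phi w).

Record NPA (Sigma : finType) := {
  state : finType;
  init : {set state};
  delta : state -> Sigma -> {set state};
  color : state -> nat
}.
Arguments state {Sigma} _.
Arguments init {Sigma} _.
Arguments delta {Sigma} _ _ _.
Arguments color {Sigma} _ _.

Definition size_aut (Sigma : finType) (A : NPA Sigma) : nat := #|state A|.

Definition is_run (Sigma : finType) (A : NPA Sigma) (w : word Sigma) (r : nat -> state A) : Prop :=
  r 0 \in init A /\ forall i, r i.+1 \in delta A (r i) (w i).

Definition inf_often (Sigma : finType) (A : NPA Sigma) (r : nat -> state A) (c : nat) : Prop :=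
  forall N, exists i, N <= i /\ color A (r i) = c.

Definition accepting_run (Sigma : finType) (A : NPA Sigma) (r : nat -> state A) : Prop :=
  exists c, @inf_often Sigma A r c /\ ~~ odd c /\ (forall c', @inf_often Sigma A r c' -> c' <= c).

Definition lang (Sigma : finType) (A : NPA Sigma) : property Sigma :=
  fun w => exists r, @is_run Sigma A w r /\ @accepting_run Sigma A r.

Definition deterministic (Sigma : finType) (A : NPA Sigma) : Prop :=
  #|init A| = 1 /\ forall q a, #|delta A q a| <= 1.

Definition safety (Sigma : finType) (A : NPA Sigma) : Prop :=
  forall q, color A q = 0.

(* Main.v *)
From Stdlib Require Import Classical ClassicalEpsilon FunctionalExtensionality.
Require Import Defs.
From mathcomp Require Import all_boot.
From mathcomp Require Import zify.

Set Implicit Arguments. Unset Strict Implicit. Unset Printing Implicit Defensive.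

Definition pb (P : Prop) : bool := if excluded_middle_informative P then true else false.
Lemma pbP (P : Prop) : reflect P (pb P).
Proof. rewrite /pb; case: excluded_middle_informative => H; by constructor. Qed.

Definition Wn (S : Type) (n : nat) (f : nat -> S) (k : nat) : word S :=
  fun i => if i < k then f i else f (k + (i - k) %% (n.+1 - k)).

Definition St (S : finType) (n : nat) :=
  ('I_n.+2 * {ffun 'I_n.+1 -> S} * {set 'I_n.+1})%type.

Definition shiftf (S : finType) n (h : {ffun 'I_n.+1 -> S}) (a : S) : {ffun 'I_n.+1 -> S} :=
  [ffun i : 'I_n.+1 => if i < n then h (inord i.+1) else a].

Definition look (S : finType) n (h : {ffun 'I_n.+1 -> S}) (a : S) (j : nat) : S :=
  if j < n.+1 then h (inord j) else a.

Definition trans (S : finType) n (phi : property S) (q : St S n) (a : S) : {set St S n} :=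
  let j := q.1.1 in let h := q.1.2 in let K := q.2 in
  let h' := shiftf h a in
  let j' : 'I_n.+2 := inord (minn j.+1 n.+1) in
  let K' := if j.+1 < n.+1 then K
            else if j.+1 == n.+1 then [set k : 'I_n.+1 | pb (phi (Wn n (look h' a) k))]
            else [set k in K | h k == a] in
  if K' == set0 then set0 else [set (j', h', K')].

Definition Aut (S : finType) n (phi : property S) (d : S) : NPA S :=
  {| state := St S n;
     init := [set (ord0, [ffun=> d], setT)];
     delta := @trans S n phi;
     color := fun _ => 0 |}.

Definition hist (S : finType) n (d : S) (w : word S) (m : nat) : {ffun 'I_n.+1 -> S} :=
  [ffun i : 'I_n.+1 => if n.+1 <= m + i then w (m + i - n.+1) else d].

Definition Pk (S : finType) n (phi : property S) (w : word S) (k m : nat) : Prop :=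
  phi (Wn n w k) /\ forall i, i < m -> w i = Wn n w k i.

Definition Kset (S : finType) n (phi : property S) (w : word S) (m : nat) : {set 'I_n.+1} :=
  if m < n.+1 then setT else [set k : 'I_n.+1 | pb (Pk n phi w k m)].

Definition canon (S : finType) n phi d (w : word S) (m : nat) : St S n :=
  (inord (minn m n.+1), hist n d w m, Kset n phi w m).

Lemma shift_hist (S : finType) n d (w : word S) m :
  shiftf (hist n d w m) (w m) = hist n d w m.+1.
Proof.
apply/ffunP => i; rewrite !ffunE.
case: ifP => hi.
  rewrite inordK; last by lia.
  rewrite addnS addSn; by [].
have -> : nat_of_ord i = n by have := ltn_ord i; lia.
rewrite ifT; last by lia.
congr w; lia.
Qed.

Lemma Wn_ext (S : Type) n (f g : nat -> S) k : k < n.+1 ->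
  (forall j, j < n.+1 -> f j = g j) -> Wn n f k = Wn n g k.
Proof.
move=> hk hfg; apply: functional_extensionality => i; rewrite /Wn.
case: ifP => hi; first by apply: hfg; lia.
apply: hfg.
have : (i - k) %% (n.+1 - k) < n.+1 - k by apply: ltn_pmod; lia.
lia.
Qed.

Lemma Wn_small (S : Type) n (w : nat -> S) k i : k < n.+1 -> i < n.+1 -> Wn n w k i = w i.
Proof.
move=> hk hi; rewrite /Wn; case: ifP => // hik.
rewrite modn_small; last by lia.
congr w; lia.
Qed.

Lemma Wn_per (S : Type) n (w : nat -> S) k m : k < n.+1 -> n.+1 <= m ->
  Wn n w k m = Wn n w k (m + k - n.+1).
Proof.
move=> hk hm; rewrite /Wn.
rewrite ifF; last by lia.
rewrite ifF; last by lia.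
have -> : m - k = (m + k - n.+1 - k) + (n.+1 - k) by lia.
by rewrite modnDr.
Qed.

Lemma Pk_mono (S : finType) n phi (w : word S) k m m' :
  m <= m' -> Pk n phi w k m' -> Pk n phi w k m.
Proof. move=> hm [h1 h2]; split => // i hi; apply: h2; lia. Qed.

Lemma Pk_succ (S : finType) n phi (w : word S) k m : k < n.+1 -> n.+1 <= m ->
  Pk n phi w k m.+1 <-> Pk n phi w k m /\ w (m + k - n.+1) = w m.
Proof.
move=> hk hm; split.
  move=> H; split; first exact: (Pk_mono (leqnSn m) H).
  case: H => _ H.
  rewrite (H m) // (H (m + k - n.+1)); last by lia.
  by rewrite (Wn_per _ hk hm).
move=> [[h1 h2] he]; split => // i hi.
case: (ltnP i m) => him; first exact: h2.
have -> : i = m by lia.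
rewrite Wn_per // -he h2 //; lia.
Qed.

Lemma look_hist (S : finType) n d (w : word S) a j : j < n.+1 ->
  look (hist n d w n.+1) a j = w j.
Proof.
move=> hj; rewrite /look hj ffunE inordK // ifT; last by lia.
congr w; lia.
Qed.

Lemma Kset_succ (S : finType) n phi d (w : word S) m :
  (let j := (canon n phi d w m).1.1 in let h := (canon n phi d w m).1.2 in
   let K := (canon n phi d w m).2 in
   if j.+1 < n.+1 then K
   else if j.+1 == n.+1 then
     [set k : 'I_n.+1 | pb (phi (Wn n (look (shiftf h (w m)) (w m)) k))]
   else [set k in K | h k == w m]) = Kset n phi w m.+1.
Proof.
rewrite /= inordK; last by lia.
case: (ltnP m n) => hmn.
  have -> : minn m n.+1 = m by lia.
  rewrite ifT; last by lia.
  by rewrite /Kset ifT ?ifT //; lia.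
case: (eqVneq m n) => [->|hne].
  have -> : minn n n.+1 = n by lia.
  rewrite ifF; last by lia.
  rewrite eqxx shift_hist /Kset ltnn.
  apply/setP => k; rewrite !inE.
  rewrite (@Wn_ext _ n _ w) //; last exact: look_hist.
  apply/pbP/pbP.
    move=> H; split => // i hi; rewrite Wn_small //.
  by case.
have hm : n.+1 <= m by lia.
have -> : minn m n.+1 = n.+1 by lia.
rewrite ifF; last by lia.
rewrite ifF; last by lia.
rewrite /Kset ifF; last by lia.
rewrite ifF; last by lia.
apply/setP => k; rewrite !inE ffunE ifT; last by lia.
apply/idP/pbP.
  move=> /andP[/pbP H1 /eqP H2]; apply/Pk_succ => //.
move=> /Pk_succ [] // H1 H2; apply/andP; split; [exact/pbP | exact/eqP].
Qed.

Lemma step (S : finType) n phi d (w : word S) m :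
  trans phi (canon n phi d w m) (w m) =
  if Kset n phi w m.+1 == set0 then set0 else [set canon n phi d w m.+1].
Proof.
have HK := @Kset_succ S n phi d w m.
rewrite /trans; move: HK; cbv zeta => ->.
case: ifP => // _.
rewrite /canon /= shift_hist; congr [set (_, _, _)].
apply: val_inj; rewrite /= !inordK; lia.
Qed.

Lemma Kset0_ne (S : finType) n phi (w : word S) m : m < n.+1 -> Kset n phi w m != set0.
Proof. move=> hm; rewrite /Kset hm; apply/set0Pn; exists ord0; by rewrite inE. Qed.

Lemma canon0 (S : finType) n phi d (w : word S) :
  canon n phi d w 0 = (ord0, [ffun=> d], setT).
Proof.
rewrite /canon /Kset /=; congr (_, _, _).
- by apply: val_inj; rewrite /= inordK.
- apply/ffunP => i; rewrite !ffunE ifF //; have := ltn_ord i; lia.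
Qed.

Lemma run_inv (S : finType) n phi d (w : word S) (r : nat -> state (Aut n phi d)) :
  is_run w r -> forall m, r m = canon n phi d w m /\ Kset n phi w m != set0.
Proof.
move=> [h0 hs]; elim => [|m [IH _]].
  split; last exact: Kset0_ne.
  by move: h0; rewrite /= inE canon0 => /eqP.
move: (hs m); rewrite IH /= step.
case: ifP => [_|/negbT hne]; first by rewrite inE.
by rewrite inE => /eqP ->.
Qed.

Lemma pigeon_seq (T : eqType) (P : T -> nat -> Prop) (s : seq T) :
  (forall t m m', m <= m' -> P t m' -> P t m) ->
  (forall m, exists2 t, t \in s & P t m) -> exists2 t, t \in s & forall m, P t m.
Proof.
move=> hmono; elim: s => [|x s IH] H.
  by case: (H 0).
case: (classic (forall m, P x m)) => [hx|]; first by exists x; rewrite ?mem_head.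
move=> /not_all_ex_not [m0 hm0].
have [|t ts ht] := IH.
  move=> m; case: (H (maxn m m0)) => t; rewrite in_cons => /orP[/eqP ->|ts] hp.
    by exfalso; apply: hm0; apply: hmono hp; lia.
  by exists t => //; apply: hmono hp; lia.
by exists t => //; rewrite in_cons ts orbT.
Qed.

Lemma lang_sub (S : finType) n phi d (w : word S) : lang (Aut n phi d) w -> phi w.
Proof.
move=> [r [hr _]].
have inv := run_inv hr.
have [k _ hk] : exists2 k : 'I_n.+1, k \in enum 'I_n.+1 & forall m, Pk n phi w k m.
  apply: pigeon_seq; first by move=> t m m' hmm; apply: Pk_mono.
  move=> m; have [_ hne] := inv (maxn m n.+1).
  move: hne; rewrite /Kset ifF; last by lia.
  case/set0Pn => k; rewrite inE => /pbP hp; exists k; first by rewrite mem_enum.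
  by apply: Pk_mono hp; lia.
have [hphi _] := hk 0.
have -> : w = Wn n w k => //.
apply: functional_extensionality => i; have [_ H] := hk i.+1; exact: H.
Qed.

Lemma lasso_Wn (S : finType) n (u : seq S) a v' :
  size u + size (a :: v') = n.+1 ->
  Wn n (lasso_word u a v') (size u) = lasso_word u a v'.
Proof.
move=> hs; apply: functional_extensionality => i; rewrite /Wn.
case: ifP => // hi.
have -> : n.+1 - size u = size (a :: v') by lia.
rewrite /lasso_word hi ifF; last by lia.
by rewrite addKn modn_mod.
Qed.

Lemma lang_sup (S : finType) n phi d (w : word S) : Ln n.+1 phi w -> lang (Aut n phi d) w.
Proof.
move=> [hphi [u [a [v' [hs hw]]]]].
have hk : size u < n.+1 by move: hs => /=; lia.
have hW : Wn n w (inord (size u) : 'I_n.+1) = w by rewrite inordK // hw lasso_Wn.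
have hne : forall m, Kset n phi w m != set0.
  move=> m; case: (ltnP m n.+1) => hm; first exact: Kset0_ne.
  rewrite /Kset ifF; last by lia.
  apply/set0Pn; exists (inord (size u)); rewrite inE; apply/pbP.
  by rewrite /Pk hW; split.
exists (canon n phi d w); split.
  split; first by rewrite /= canon0 inE.
  by move=> i; rewrite /= step (negbTE (hne i.+1)) inE.
exists 0; split; last split => //.
  by move=> N; exists N.
by move=> c' /(_ 0) [i [_ <-]].
Qed.

Lemma pow_bound N : 0 < N -> N.+1 * 2 ^ N <= 4 * N ^ N.
Proof.
case: N => // N _; elim: N => [|N IH]; first by [].
case: N IH => [|N] IH; first by [].
have hY : N.+2 ^ N.+2 <= N.+3 ^ N.+2 by rewrite leq_exp2r.
move: IH hY; rewrite (expnS 2 N.+2) (expnS N.+3 N.+2).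
move: (2 ^ N.+2) (N.+2 ^ N.+2) (N.+3 ^ N.+2) => X Y Z; nia.
Qed.

Definition Triv (S : finType) : NPA S :=
  {| state := unit; init := setT; delta := fun _ _ => set0; color := fun _ => 0 |}.

Lemma triv_ok (S : finType) n (phi : property S) :
  (forall w, ~ Ln n phi w) -> lasso_precise_under n (lang (Triv S)) phi.
Proof.
move=> H.
have hl : forall w, ~ lang (Triv S) w.
  by move=> w [r [[_ hs] _]]; move: (hs 0); rewrite inE.
split; first by move=> w /hl.
move=> w; split; [by case=> /hl | by move=> /H].
Qed.

Theorem theorem1 :
  exists c : nat,
    forall (Sigma : finType) (phi : property Sigma) (n : nat),
      exists A : NPA Sigma,
        deterministic A /\ safety A /\
        size_aut A <= c * (#|Sigma| ^ n * n ^ n) + c /\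
        lasso_precise_under n (lang A) phi.
Proof.
exists 4 => S phi n.
have trivcase : (forall w, ~ Ln n phi w) -> exists A : NPA S,
    deterministic A /\ safety A /\
    size_aut A <= 4 * (#|S| ^ n * n ^ n) + 4 /\ lasso_precise_under n (lang A) phi.
  move=> H; exists (Triv S); split; last split; last split.
  - split; first by rewrite cardsT card_unit.
    by move=> q a; rewrite cards0.
  - by [].
  - rewrite /size_aut /= card_unit; lia.
  - exact: triv_ok.
case: n trivcase => [|n] trivcase.
  apply: trivcase => w [_ [u [a [v' [hs _]]]]]; move: hs => /=; lia.
case: (posnP #|S|) => hS.
  apply: trivcase => w _; have := card0_eq hS (w 0); by rewrite !inE.
case/card_gt0P: hS => d _.
exists (Aut n phi d); split; last split; last split.
- split; first by rewrite cards1.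
  move=> q a; rewrite /= /trans; case: ifP => _; by rewrite ?cards0 ?cards1.
- by [].
- rewrite /size_aut /= !card_prod !card_ord card_ffun card_ord.
  have -> : #|{: {set 'I_n.+1}}| = 2 ^ n.+1.
    by rewrite -cardsT -powersetT card_powerset cardsT card_ord.
  have := pow_bound (ltn0Sn n).
  move: (#|S| ^ n.+1) (2 ^ n.+1) (n.+1 ^ n.+1) => s X P; nia.
- split; first by move=> w; apply: lang_sub.
  move=> w; split.
    by case=> /lang_sub hw hl; split.
  move=> H; split => //; first exact: lang_sup.
  by case: H.
Qed.
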